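(* Let $g\in C(\mathbb{R},\mathbb{R})$ and $\mathcal{G}=(g,\infty)=\{f\in C(\mathbb{R},\mathbb{R}):(\forall x\in\mathbb{R})\,f(x)>g(x)\}$. Then $\mathcal{K}_\mathcal{G}=\{\mathrm{CL}(\mathbb{R})\cap\mathcal{P}(X):X\subseteq\mathbb{R}\}$.
   Context: $\mathrm{CL}(\mathbb{R})$ is the family of closed subsets of $\mathbb{R}$ and $\mathcal{P}(X)$ the power set of $X$. For $\mathcal{G}\subseteq C(\mathbb{R},\mathbb{R})$ let $R_\mathcal{G}=\{(f,E)\in C(\mathbb{R},\mathbb{R})\times\mathrm{CL}(\mathbb{R}):(\exists h\in\mathcal{G})\, f\restriction E=h\restriction E\}$; for $\mathcal{F}\subseteq C(\mathbb{R},\mathbb{R})$ put $E_\mathcal{G}(\mathcal{F})=\{E\in\mathrm{CL}(\mathbb{R}):(\forall f\in\mathcal{F})\,(f,E)\in R_\mathcal{G}\}$, and let $\mathcal{K}_\mathcal{G}=\{E_\mathcal{G}(\mathcal{F}):\mathcal{F}\subseteq C(\mathbb{R},\mathbb{R})\}$. *)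

(* Defs.v *)
From Stdlib Require Import Reals.
Open Scope R_scope.

(* C(R,R) is represented by functions R -> R with the predicate [continuity];
   subsets of R are predicates R -> Prop; CL(R) = those satisfying [closed_set]. *)

Definition R_G (G : (R -> R) -> Prop) (f : R -> R) (E : R -> Prop) : Prop :=
  continuity f /\ closed_set E /\
  exists h, G h /\ forall x, E x -> f x = h x.

Definition E_G (G : (R -> R) -> Prop) (F : (R -> R) -> Prop) : (R -> Prop) -> Prop :=
  fun E => closed_set E /\ forall f, F f -> R_G G f E.

Definition K_G (G : (R -> R) -> Prop) : ((R -> Prop) -> Prop) -> Prop :=
  fun S => exists F : (R -> R) -> Prop,
    (forall f, F f -> continuity f) /\ S = E_G G F.

Definition above (g : R -> R) : (R -> R) -> Prop :=
  fun f => continuity f /\ forall x, f x > g x.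

(* Main.v *)
Require Import Defs.
From Stdlib Require Import Reals Lra Classical FunctionalExtensionality PropExtensionality.
Open Scope R_scope.

Section Dist.
Variable E : R -> Prop.
Variable y0 : R.
Hypothesis Ey0 : E y0.

Definition dset (x : R) : R -> Prop := fun z => exists y, E y /\ z = - Rabs (x - y).

Lemma dset_bound x : bound (dset x).
Proof. exists 0. intros z [y [_ ->]]. pose proof (Rabs_pos (x - y)); lra. Qed.

Lemma dset_ne x : exists z, dset x z.
Proof. exists (- Rabs (x - y0)). exists y0; split; auto. Qed.

Definition dd (x : R) : R := - proj1_sig (completeness (dset x) (dset_bound x) (dset_ne x)).

Lemma dd_spec x : is_lub (dset x) (- dd x).
Proof. unfold dd. rewrite Ropp_involutive. apply proj2_sig. Qed.

Lemma dd_ge0 x : 0 <= dd x.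
Proof.
  destruct (dd_spec x) as [_ H].
  assert (- dd x <= 0); [|lra].
  apply H. intros z [y [_ ->]]. pose proof (Rabs_pos (x - y)); lra.
Qed.

Lemma dd_E x : E x -> dd x = 0.
Proof.
  intro Hx. destruct (dd_spec x) as [H _].
  assert (0 <= - dd x). { apply H. exists x; split; auto. rewrite Rminus_diag, Rabs_R0; lra. }
  pose proof (dd_ge0 x); lra.
Qed.

Lemma dd_pos x : closed_set E -> ~ E x -> 0 < dd x.
Proof.
  intros Hc Hx. destruct (Hc x Hx) as [del Hd].
  destruct (dd_spec x) as [_ H].
  assert (- dd x <= - del); [|pose proof (cond_pos del); lra].
  apply H. intros z [y [Ey ->]].
  destruct (Rlt_or_le (Rabs (y - x)) del) as [Hl|Hl].
  - exfalso. apply (Hd y Hl Ey).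
  - rewrite Rabs_minus_sym in Hl. lra.
Qed.

Lemma dd_lip x x' : - dd x' <= - dd x + Rabs (x - x').
Proof.
  destruct (dd_spec x') as [_ H]. destruct (dd_spec x) as [H1 _].
  apply H. intros z [y [Ey ->]].
  assert (- Rabs (x - y) <= - dd x) by (apply H1; exists y; auto).
  pose proof (Rabs_triang (x - x') (x' - y)).
  replace (x - x' + (x' - y)) with (x - y) in H2 by ring. lra.
Qed.

Lemma dd_cont : continuity dd.
Proof.
  intros x; unfold continuity_pt, continue_in, limit1_in, limit_in; intros eps He.
  exists eps; split; auto.
  intros x' [_ Hx']. simpl in *. unfold R_dist in *.
  pose proof (dd_lip x x'). pose proof (dd_lip x' x).
  rewrite Rabs_minus_sym in H.
  apply Rabs_def1; lra.
Qed.
End Dist.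

Lemma key (g f : R -> R) (E : R -> Prop) : continuity g -> continuity f -> closed_set E ->
  (forall x, E x -> f x > g x) ->
  exists h, above g h /\ forall x, E x -> f x = h x.
Proof.
  intros hg hf hE hfg.
  destruct (classic (exists y, E y)) as [[y0 Ey0]|Hn].
  - exists (fun x => g x + Rabs (f x - g x) + dd E y0 Ey0 x). split; [split|].
    + apply (continuity_plus (fun x => g x + Rabs (f x - g x)) (dd E y0 Ey0)); [|apply dd_cont].
      apply (continuity_plus g (fun x => Rabs (f x - g x))); auto.
      apply (continuity_comp (fun x => f x - g x) Rabs); [|apply Rcontinuity_abs].
      apply (continuity_minus f g); auto.
    + intros x. destruct (classic (E x)) as [Ex|Ex].
      * rewrite dd_E by auto. specialize (hfg x Ex). rewrite Rabs_right by lra. lra.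
      * pose proof (dd_pos E y0 Ey0 x hE Ex). pose proof (Rabs_pos (f x - g x)). lra.
    + intros x Ex. rewrite dd_E by auto. specialize (hfg x Ex). rewrite Rabs_right by lra. lra.
  - exists (fun x => g x + 1). split; [split|].
    + apply (continuity_plus g (fun _ => 1)); auto. apply continuity_const. intros a b; auto.
    + intros; lra.
    + intros x Ex. exfalso; eauto.
Qed.

Theorem theorem4p1 (g : R -> R) (hg : continuity g) :
  forall S : (R -> Prop) -> Prop,
    K_G (above g) S <->
    exists X : R -> Prop, S = (fun E => closed_set E /\ included E X).
Proof.
  intros S; split.
  - intros [F [HF ->]].
    exists (fun x => forall f, F f -> f x > g x).
    apply functional_extensionality; intro E. apply propositional_extensionality.
    unfold E_G; split.
    + intros [Hc H]. split; auto. intros x Ex f Ff.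
      destruct (H f Ff) as [_ [_ [h [[_ Hh] Hfh]]]]. rewrite Hfh; auto.
    + intros [Hc H]. split; auto. intros f Ff. split; [auto|split; [auto|]].
      apply key; auto.
  - intros [X ->].
    exists (fun f => exists a, ~ X a /\ f = fun x => g x + Rabs (x - a)).
    assert (Hca : forall a, continuity (fun x => g x + Rabs (x - a))).
    { intro a. apply (continuity_plus g (fun x => Rabs (x - a))); auto.
      apply (continuity_comp (fun x => x - a) Rabs); [|apply Rcontinuity_abs].
      apply (continuity_minus id (fun _ => a)). apply derivable_continuous, derivable_id.
      apply continuity_const. intros u v; auto. }
    split.
    + intros f [a [_ ->]]. auto.
    + apply functional_extensionality; intro E. apply propositional_extensionality.
      unfold E_G; split.
      * intros [Hc H]. split; auto. intros f [a [nXa ->]].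
        split; [auto|split; [auto|]]. apply key; auto.
        intros x Ex. assert (x <> a) by (intro; subst; auto).
        assert (0 < Rabs (x - a)) by (apply Rabs_pos_lt; lra). lra.
      * intros [Hc H]. split; auto.
        intros x Ex. apply NNPP. intro nX.
        destruct (H _ (ex_intro _ x (conj nX eq_refl))) as [_ [_ [h [[_ Hh] Hfh]]]].
        specialize (Hfh x Ex). specialize (Hh x). rewrite Rminus_diag, Rabs_R0 in Hfh. lra.
Qed.
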